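(* Let $X$ be a connected non-bipartite graph with $n$ vertices and $m>n$ edges, and let $\{a,b\}\ne\{\alpha,\beta\}$ be edges of $X$. If $\mathbf f_{ab}$ and $\mathbf f_{\alpha\beta}$ are strongly cospectral with respect to the adjacency matrix of the line graph $\mathcal L(X)$, then the graph obtained from $X$ by deleting the edges $\{a,b\}$ and $\{\alpha,\beta\}$ is either disconnected or bipartite.
   Context: The line graph $\mathcal L(X)$ has vertex set $E(X)$ with edges adjacent iff they share an endpoint; $\mathbf f_{ab}$ is the vertex state of the vertex corresponding to $\{a,b\}$. For $M=\sum_\theta\theta F_\theta$ (orthogonal spectral projections), vectors $\mathbf x,\mathbf y$ are strongly cospectral if $F_\theta\mathbf x=\pm F_\theta\mathbf y$ for every eigenvalue $\theta$. *)

(* Defs.v *)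
From HB Require Import structures.
From mathcomp Require Import all_boot all_order all_algebra.
From mathcomp Require Import reals.
Set Implicit Arguments. Unset Strict Implicit. Unset Printing Implicit Defensive.
Import Order.TTheory GRing.Theory Num.Theory.
Local Open Scope ring_scope.

Section Graphs.
Variable V : finType.

Definition simple_graph (adj : rel V) : Prop := symmetric adj /\ irreflexive adj.

Definition edgeset (adj : rel V) : {set {set V}} :=
  [set [set x; y] | x in V, y in V & adj x y].

Definition edge (adj : rel V) := {e : {set V} | e \in edgeset adj}.

Definition connected_graph (adj : rel V) : Prop := forall x y : V, connect adj x y.

Definition bipartite (adj : rel V) : Prop :=
  exists c : V -> bool, forall x y, adj x y -> c x != c y.

Definition delete2 (adj : rel V) (e1 e2 : {set V}) : rel V :=
  fun x y => [&& adj x y, [set x; y] != e1 & [set x; y] != e2].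

(* Adjacency matrix of the line graph L(X), vertices indexed by 'I_#|edge adj|
   via the enumeration of the finite type of edges: two distinct edges are
   adjacent iff they share an endpoint. *)
Definition line_adj (R : nzRingType) (adj : rel V) : 'M[R]_#|{: edge adj}| :=
  \matrix_(i, j) (if (i != j) &&
                     (val (enum_val i : edge adj) :&: val (enum_val j : edge adj) != set0)
                  then 1 else 0).

Definition vstate (R : nzRingType) (adj : rel V) (e : edge adj) : 'rV[R]_#|{: edge adj}| :=
  delta_mx 0 (enum_rank e).
End Graphs.

(* Orthogonal projection (acting on row vectors by right multiplication)
   onto the row space of a matrix B with linearly independent rows:
   P = B^T (B B^T)^{-1} B. *)
Definition orth_proj (R : fieldType) (r n : nat) (B : 'M[R]_(r, n)) : 'M[R]_n :=
  B^T *m invmx (B *m B^T) *m B.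

Definition spec_proj (R : fieldType) (n : nat) (M : 'M[R]_n) (theta : R) : 'M[R]_n :=
  orth_proj (row_base (eigenspace M theta)).

Definition strongly_cospectral (R : fieldType) (n : nat) (M : 'M[R]_n) (x y : 'rV[R]_n) : Prop :=
  forall theta : R, eigenvalue M theta ->
    x *m spec_proj M theta = y *m spec_proj M theta \/
    x *m spec_proj M theta = - (y *m spec_proj M theta).

(* Main.v *)
Require Import Defs.
From HB Require Import structures.
From mathcomp Require Import all_boot all_order all_algebra.
From mathcomp Require Import reals.
From Stdlib Require Import Classical.
Import Order.TTheory GRing.Theory Num.Theory.
Local Open Scope ring_scope.

Lemma unit_BBt (R : realType) r n (B : 'M[R]_(r, n)) :
  row_free B -> B *m B^T \in unitmx.
Proof.
move=> fB; rewrite -row_free_unit -kermx_eq0; apply/eqP/row_matrixP => k.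
rewrite row0; apply: (row_free_inj fB); rewrite mul0mx.
have /sub_kermxP : (row k (kermx (B *m B^T)) <= kermx (B *m B^T))%MS by exact: row_sub.
set x := row k _ => Hx.
set y := x *m B.
have Hy : y *m y^T = 0 by rewrite /y trmx_mul mulmxA -(mulmxA x) Hx mul0mx.
clearbody y; apply/rowP => j; rewrite mxE.
have := congr1 (fun M : 'M[R]_1 => M 0 0) Hy; rewrite !mxE => H.
have H0 : forall i, predT i -> 0 <= y 0 i * y^T i 0.
  by move=> i _; rewrite mxE -expr2 sqr_ge0.
have := @psumr_eq0P R _ predT (fun j => y 0 j * y^T j 0) H0 H j isT.
by rewrite mxE => /eqP; rewrite mulf_eq0 orbb => /eqP.
Qed.

Lemma orth_proj_tr (R : realType) r n (B : 'M[R]_(r, n)) :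
  (orth_proj B)^T = orth_proj B.
Proof.
by rewrite /orth_proj !trmx_mul trmxK trmx_inv trmx_mul trmxK mulmxA.
Qed.

Lemma orth_proj_id (R : realType) r n (B : 'M[R]_(r, n)) (w : 'rV[R]_n) :
  row_free B -> (w <= B)%MS -> w *m orth_proj B = w.
Proof.
move=> fB /submxP [D ->]; rewrite /orth_proj !mulmxA -(mulmxA D B) -(mulmxA D).
by rewrite mulmxV ?unit_BBt // mulmx1.
Qed.

Lemma edgeP (V : finType) (adj : rel V) (e : edge adj) :
  exists x y, adj x y /\ val e = [set x; y].
Proof.
case: e => /= e /imset2P [x y _]; rewrite inE => Hxy ->.
by exists x, y.
Qed.

Arguments edgeP {V adj}.

Lemma mem_edgeset (V : finType) (adj : rel V) x y :
  adj x y -> [set x; y] \in edgeset adj.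
Proof. by move=> H; apply/imset2P; exists x y; rewrite ?inE. Qed.

Arguments mem_edgeset {V adj x y}.

Lemma sum_set2 (R : nzRingType) (V : finType) (x y : V) (F : V -> R) :
  x != y -> \sum_v (v \in [set x; y])%:R * F v = F x + F y.
Proof.
move=> nxy; rewrite (bigD1 x) //= !inE eqxx mul1r (bigD1 y) /=; last by rewrite eq_sym.
rewrite !inE eqxx orbT mul1r big1 ?addr0 // => v /andP [hx hy].
by rewrite !inE (negbTE hx) (negbTE hy) mul0r.
Qed.

Lemma neq_of_adj (V : finType) (adj : rel V) a b :
  simple_graph adj -> adj a b -> a != b.
Proof. by move=> [_ irr] h; apply/eqP => E; move: h; rewrite E irr. Qed.

Arguments neq_of_adj {V adj a b}.

Lemma line_adj_entry (R : realType) (V : finType) (adj : rel V) :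
  simple_graph adj -> forall (i k : 'I_#|{: edge adj}|) a b,
  val (enum_val k) = [set a; b] -> a != b ->
  line_adj R adj i k =
   (a \in val (enum_val i))%:R + (b \in val (enum_val i))%:R - 2 * (i == k)%:R.
Proof.
move=> Hs i k a b ek nab.
have [c [d [hcd ei]]] := edgeP (enum_val i).
have ncd := neq_of_adj Hs hcd.
rewrite mxE; case: (eqVneq i k) => [->|nik] /=.
  by rewrite ek !inE !eqxx orbT /= mulr1 subrr.
have ne : val (enum_val i) != val (enum_val k).
  by apply: contra nik => /eqP/val_inj/enum_val_inj ->.
rewrite mulr0 subr0.
case ha: (a \in val (enum_val i)); case hb: (b \in val (enum_val i)).
- exfalso; move/negP: ne; apply; rewrite eq_sym eqEcard ek.
  rewrite subUset !sub1set ha hb /= ei !cards2 ncd nab //.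
- have -> : val (enum_val i) :&: val (enum_val k) != set0.
    by apply/set0Pn; exists a; rewrite inE ha ek !inE eqxx.
  by rewrite addr0.
- have -> : val (enum_val i) :&: val (enum_val k) != set0.
    by apply/set0Pn; exists b; rewrite inE hb ek !inE eqxx orbT.
  by rewrite add0r.
- have -> : val (enum_val i) :&: val (enum_val k) == set0.
    apply/eqP/setP => v; rewrite !inE ek !inE.
    apply/negbTE/negP => /andP [hv /orP [/eqP E|/eqP E]]; by rewrite E ?ha ?hb in hv.
  by rewrite addr0.
Qed.

Lemma w_eigen (R : realType) (V : finType) (adj : rel V) (w : 'rV[R]_#|{: edge adj}|) :
  simple_graph adj ->
  (forall v : V, \sum_i w 0 i * (v \in val (enum_val i))%:R = 0) ->
  w *m line_adj R adj = (-2) *: w.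
Proof.
move=> Hs Hw; apply/rowP => k; rewrite !mxE.
have [a [b [hab ek]]] := edgeP (enum_val k).
have nab := neq_of_adj Hs hab.
rewrite (eq_bigr (fun i => w 0 i * (a \in val (enum_val i))%:R +
     w 0 i * (b \in val (enum_val i))%:R - 2 * (w 0 i * (i == k)%:R))); last first.
  by move=> i _; rewrite (@line_adj_entry R V adj Hs i k a b ek nab) mulrBr mulrDr mulrCA.
rewrite sumrB big_split /= !Hw add0r -mulr_sumr (bigD1 k) //= eqxx mulr1.
rewrite big1 ?addr0 ?sub0r ?mulNr // => i /negbTE ->; by rewrite mulr0.
Qed.

Lemma zero_of_conn (R : realType) (V : finType) (e : rel V) (zz : V -> R) :
  (forall x y, e x y -> zz x + zz y = 0) -> connected_graph e -> ~ bipartite e ->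
  forall v, zz v = 0.
Proof.
move=> Hz Hc Hb v0; apply/eqP/negPn/negP => nz.
have Hy : forall x y, e x y -> zz y = - zz x.
  by move=> x y /Hz /eqP; rewrite addrC addr_eq0 => /eqP.
have cl : closed e [pred v | `|zz v| == `|zz v0|].
  by move=> x y /Hy H; rewrite !inE /= H normrN.
have Hall : forall y, zz y != 0.
  move=> y; have := closed_connect cl (Hc v0 y); rewrite !inE eqxx => /esym/eqP.
  by move=> H; rewrite -normr_eq0 H normr_eq0.
apply: Hb; exists (fun v => 0 < zz v) => x y /Hy ->.
rewrite oppr_gt0; move: (Hall x); case: (ltrgtP (zz x) 0) => //.
Qed.

Lemma exists_w (R : realType) (V : finType) (adj : rel V) (e1 e2 : edge adj) :
  simple_graph adj -> e1 != e2 ->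
  connected_graph (delete2 adj (val e1) (val e2)) ->
  ~ bipartite (delete2 adj (val e1) (val e2)) ->
  exists w : 'rV[R]_#|{: edge adj}|,
    [/\ (forall v : V, \sum_i w 0 i * (v \in val (enum_val i))%:R = 0),
        w 0 (enum_rank e1) = 1 & w 0 (enum_rank e2) = 0].
Proof.
move=> Hs ne Hc Hb.
pose N : 'M[R]_(#|{: edge adj}|, #|V|) :=
  \matrix_(i, j) ((enum_val (j : 'I_#|{: V}|) : V) \in
      val (enum_val (i : 'I_#|{: edge adj}|) : edge adj))%:R.
pose c1 : 'cV[R]_#|{: edge adj}| := delta_mx (enum_rank e1) 0.
pose c2 : 'cV[R]_#|{: edge adj}| := delta_mx (enum_rank e2) 0.
pose A := row_mx (row_mx c1 c2) N.
pose t : 'rV[R]_(1 + 1 + #|V|) := row_mx (row_mx (1 : 'M[R]_1) 0) 0.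
have NE : forall (i : 'I_#|{: edge adj}|) (z : 'cV[R]_#|V|) x y,
    val (enum_val i) = [set x; y] -> x != y ->
    (N *m z) i 0 = z (enum_rank x) 0 + z (enum_rank y) 0.
  move=> i z x y ei nxy; rewrite mxE.
  rewrite (reindex (@enum_rank V)) /=; last exact: onW_bij (@enum_rank_bij V).
  rewrite (eq_bigr (fun v => (v \in [set x; y])%:R * z (enum_rank v) 0)).
    exact: sum_set2.
  by move=> v _; rewrite mxE enum_rankK ei.
have tA : (t <= A)%MS.
  apply/idPn => nt; move: nt; rewrite submxE; set U := cokermx A => nt.
  have : [exists j0, (t *m U) 0 j0 != 0].
    apply: contraR nt => /existsPn H; apply/eqP/matrixP => i j.
    by rewrite (ord1 i) (eqP (negPn (H j))) mxE.
  case/existsP => j0 Hj0.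
  pose u := U *m delta_mx j0 (0 : 'I_1).
  have Au : A *m u = 0 by rewrite /u mulmxA mulmx_coker mul0mx.
  have tu : (t *m u) 0 0 != 0.
    by rewrite /u mulmxA -colE mxE.
  rewrite -(vsubmxK u) -(vsubmxK (usubmx u)) in Au tu.
  set s := usubmx (usubmx u) in Au tu; set r := dsubmx (usubmx u) in Au tu.
  set z := dsubmx u in Au tu.
  rewrite /t /A !mul_row_col !mul0mx !addr0 mul1mx in Au tu.
  have row0E : forall i, (c1 *m s) i 0 + (c2 *m r) i 0 + (N *m z) i 0 = 0.
    move=> i; have := congr1 (fun M : 'cV[R]_#|{: edge adj}| => M i 0) Au.
    by rewrite /= mxE [X in X + _ = _]mxE [RHS]mxE.
  have cE : forall (c : 'cV[R]_#|{: edge adj}|) (q : 'M[R]_1) i,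
      (c *m q) i 0 = c i 0 * q 0 0.
    by move=> c q i; rewrite mxE big_ord1.
  pose zz v := z (enum_rank v) 0.
  have Hz : forall x y, delete2 adj (val e1) (val e2) x y -> zz x + zz y = 0.
    move=> x y /and3P [hxy h1 h2].
    pose e : edge adj := exist _ [set x; y] (mem_edgeset hxy).
    have := row0E (enum_rank e).
    rewrite (NE _ _ x y) ?enum_rankK ?(neq_of_adj Hs hxy) // !cE /c1 /c2 ![delta_mx _ _ _ _]mxE.
    have f1 : (e == e1) = false by apply/negbTE; apply: contra h1 => /eqP <-.
    have f2 : (e == e2) = false by apply/negbTE; apply: contra h2 => /eqP <-.
    by rewrite !(inj_eq enum_rank_inj) f1 f2 /= !mul0r !add0r.
  have z0 := @zero_of_conn R V _ zz Hz Hc Hb.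
  have [a [b [hab ea]]] := edgeP e1.
  have := row0E (enum_rank e1).
  rewrite (NE _ _ a b) ?enum_rankK ?(neq_of_adj Hs hab) // !cE /c1 /c2 ![delta_mx _ _ _ _]mxE.
  rewrite -/(zz a) -/(zz b) !z0 eqxx (inj_eq enum_rank_inj) (negbTE ne) /=.
  rewrite mul1r mul0r !addr0 => /eqP; by move: tu; rewrite mxE => /negbTE ->.
case/submxP: tA => w Hw; exists w.
rewrite /t /A mul_mx_row mul_mx_row in Hw.
case/eq_row_mx: Hw => /eq_row_mx [H1 H2] H3.
split.
- move=> v; have := congr1 (fun M : 'rV[R]_#|V| => M 0 (enum_rank v)) H3.
  rewrite !mxE => H; rewrite [RHS]H; apply: eq_bigr => i _; by rewrite /N mxE enum_rankK.
- have := congr1 (fun M : 'M[R]_1 => M 0 0) H1.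
  by rewrite /c1 -colE !mxE.
- have := congr1 (fun M : 'M[R]_1 => M 0 0) H2.
  by rewrite /c2 -colE !mxE.
Qed.

Theorem mainTheorem14 (R : realType) (V : finType) (adj : rel V)
  (e1 e2 : edge adj) :
  simple_graph adj ->
  connected_graph adj ->
  ~ bipartite adj ->
  (#|V| < #|edgeset adj|)%N ->
  e1 != e2 ->
  strongly_cospectral (line_adj R adj) (vstate R e1) (vstate R e2) ->
  ~ connected_graph (delete2 adj (val e1) (val e2)) \/
  bipartite (delete2 adj (val e1) (val e2)).
Proof.
move=> Hs Hc Hnb _ ne Hsc.
case: (classic (bipartite (delete2 adj (val e1) (val e2)))) => [Hb|Hnb'];
  [by right | left => Hc'].
have [w [Hw1 Hw2 Hw3]] := @exists_w R V adj e1 e2 Hs ne Hc' Hnb'.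
have Hev : w *m line_adj R adj = (-2) *: w := @w_eigen R V adj w Hs Hw1.
have Hsub : (w <= eigenspace (line_adj R adj) (-2))%MS by apply/eigenspaceP.
have Heig : eigenvalue (line_adj R adj) (-2).
  apply/eigenvalueP; exists w => //; apply/eqP => /rowP/(_ (enum_rank e1)).
  by rewrite Hw2 mxE => /eqP; rewrite oner_eq0.
have HP : w *m spec_proj (line_adj R adj) (-2) = w.
  by apply: orth_proj_id; [exact: row_base_free | rewrite eq_row_base].
have HPt := @orth_proj_tr R _ _ (row_base (eigenspace (line_adj R adj) (-2))).
have key : forall e : edge adj,
    ((vstate R e *m spec_proj (line_adj R adj) (-2)) *m w^T) 0 0 = w 0 (enum_rank e).
  move=> e; rewrite -mulmxA.
  have -> : spec_proj (line_adj R adj) (-2) *m w^T = w^T.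
    by rewrite /spec_proj -HPt -trmx_mul -/(spec_proj _ _) HP.
  by rewrite /vstate -rowE !mxE.
case: (Hsc _ Heig) => H; have := congr1 (fun X => (X *m w^T) 0 0) H;
  rewrite /= ?mulNmx.
  by rewrite !key Hw2 Hw3 => /eqP; rewrite oner_eq0.
have oppE : forall X : 'M[R]_1, (- X) 0 0 = - X 0 0 by move=> X; rewrite mxE.
by rewrite oppE !key Hw2 Hw3 oppr0 => /eqP; rewrite oner_eq0.
Qed.
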